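(* Let $G$ be a connected graph, let $T$ be a spanning tree of $G$ rooted in $s$ which is an $\mathcal L$-tree of some DFS on $G$, and let $\sigma$ be a DFS order of the tree $T$ starting at $s$. Then $\sigma$ is a DFS order of $G$ and the $\mathcal L$-tree of $\sigma$ (with respect to $G$) is $T$.
   Context: Graphs are finite, simple, undirected. DFS: a search that starts at a vertex and repeatedly visits an unvisited neighbor of the most recently visited vertex that still has an unvisited neighbor; a DFS order of a graph is any order of its vertices produced this way. The $\mathcal L$-tree of a vertex order $(v_1,\dots,v_n)$ of a connected graph $G$ is the spanning tree rooted at $v_1$ with an edge from each $v_i$ ($i>1$) to its rightmost $G$-neighbor $v_j$ with $j<i$. A spanning tree $T$ rooted at $s$ is an $\mathcal L$-tree of DFS on $G$ if some DFS order of $G$ starting at $s$ has $\mathcal L$-tree $T$. *)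

(* Defs.v *)
From mathcomp Require Import all_boot.
Set Implicit Arguments. Unset Strict Implicit. Unset Printing Implicit Defensive.

Definition simple_graph (V : finType) (G : rel V) : Prop :=
  irreflexive G /\ symmetric G.

Definition connected_graph (V : finType) (G : rel V) : Prop :=
  forall x y : V, connect G x y.

Definition vertex_order (V : finType) (s : seq V) : Prop :=
  uniq s /\ forall x : V, x \in s.

(* s is a DFS order of G starting at r: s is a vertex order with head r, and
   for every position i > 0, the vertex s_i is adjacent to some earlier s_j
   such that every vertex visited strictly between j and i has no unvisited
   neighbour (i.e. s_j is the most recently visited vertex that still has an
   unvisited neighbour, and s_i is an unvisited neighbour of it). *)
Definition dfs_order (V : finType) (G : rel V) (r : V) (s : seq V) : Prop :=
  vertex_order s /\ head r s = r /\
  forall i, 0 < i < size s ->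
    exists2 j, j < i &
      G (nth r s j) (nth r s i) /\
      forall k, j < k < i -> forall w : V, G (nth r s k) w -> w \in take i s.

(* The L-tree of the vertex order s: each vertex y (other than the first) is
   joined to its rightmost G-neighbour preceding it in s. *)
Definition Lparent_edge (V : finType) (G : rel V) (s : seq V) (x y : V) : bool :=
  let P := [seq z <- take (index y s) s | G z y] in
  (P != [::]) && (last y P == x).

Definition Ltree (V : finType) (G : rel V) (s : seq V) : rel V :=
  fun x y => Lparent_edge G s x y || Lparent_edge G s y x.

(* A spanning tree of G (as an undirected edge relation): a connected simple
   subgraph of G with #|V| - 1 edges (each edge counted twice as an ordered
   pair). *)
Definition spanning_tree (V : finType) (G T : rel V) : Prop :=
  simple_graph T /\ subrel T G /\ connected_graph T /\
  #|[set p : V * V | T p.1 p.2]| = (#|V| - 1).*2.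

Definition is_Ltree_of_DFS (V : finType) (G T : rel V) (r : V) : Prop :=
  exists2 s, dfs_order G r s & Ltree G s =2 T.

(* Main.v *)
Require Import Defs.
From mathcomp Require Import all_boot.
From mathcomp Require Import zify.
Set Implicit Arguments. Unset Strict Implicit. Unset Printing Implicit Defensive.

Lemma last_filter_take (T : eqType) (a : pred T) (s : seq T) x0 j n :
  j.+1 + n <= size s -> a (nth x0 s j) ->
  (forall k, j < k < j.+1 + n -> ~~ a (nth x0 s k)) ->
  forall y, [seq z <- take (j.+1 + n) s | a z] != [::] /\
            last y [seq z <- take (j.+1 + n) s | a z] = nth x0 s j.
Proof.
move=> Hsz Ha Hk y; elim: n Hsz Hk => [|n IH] Hsz Hk.
  rewrite addn0 (take_nth x0) ?filter_rcons ?Ha ?last_rcons; last by lia.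
  by case: [seq _ <- _ | _].
rewrite addnS (take_nth x0) ?filter_rcons; last by lia.
rewrite (negbTE (Hk _ _)); last by lia.
apply: IH; first by lia.
by move=> k Hk'; apply: Hk; lia.
Qed.

Section Generic.
Variables (V : finType) (G : rel V) (r : V) (s : seq V).
Hypothesis Hs : dfs_order G r s.
Hypothesis HGs : symmetric G.

Definition lpar (v : V) := last v [seq z <- take (index v s) s | G z v].
Definition anc (u v : V) := exists n, iter n lpar v = u.

Lemma mem_s v : v \in s.
Proof. by case: Hs => [[_ H] _]. Qed.

Lemma uniq_s : uniq s.
Proof. by case: Hs => [[H _] _]. Qed.

Lemma idx_r : index r s = 0.
Proof. case: Hs => [_ [Hh _]]; move: (mem_s r); case: s Hh => //= x t -> _; by rewrite eqxx. Qed.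

Lemma nth_r0 : nth r s 0 = r.
Proof. by rewrite -{1}idx_r nth_index // mem_s. Qed.

Lemma par_r : lpar r = r.
Proof. rewrite /lpar idx_r take0 //. Qed.

Lemma idx_nth b : b < size s -> index (nth r s b) s = b.
Proof. by move=> Hb; apply: index_uniq Hb uniq_s. Qed.

Lemma idx_lt v : index v s < size s.
Proof. by rewrite index_mem mem_s. Qed.

Lemma par_uniq b c : b < size s -> c < b -> G (nth r s c) (nth r s b) ->
  (forall k, c < k < b -> forall w, G (nth r s k) w -> w \in take b s) ->
  [seq z <- take b s | G z (nth r s b)] != [::] /\ lpar (nth r s b) = nth r s c.
Proof.
move=> Hb Hcb HG Hcl.
have E : b = c.+1 + (b - c.+1) by lia.
have Hk : forall k, c < k < c.+1 + (b - c.+1) -> ~~ G (nth r s k) (nth r s b).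
  move=> k Hk; apply/negP => /(Hcl k) H.
  have /H : c < k < b by lia.
  by rewrite in_take ?mem_s // idx_nth // ltnn.
have := last_filter_take (a := fun z => G z (nth r s b)) (x0 := r) _ HG Hk (nth r s b).
rewrite -E /lpar idx_nth // => H; apply: H; exact: ltnW.
Qed.

Lemma dfs_at b : 0 < b < size s -> exists2 c, c < b &
  G (nth r s c) (nth r s b) /\
  forall k, c < k < b -> forall w, G (nth r s k) w -> w \in take b s.
Proof. by case: Hs => [_ [_ H]]; apply: H. Qed.

Lemma Pnil v : ([seq z <- take (index v s) s | G z v] != [::]) = (v != r).
Proof.
case: (eqVneq v r) => [->|Hv]; first by rewrite idx_r take0 eqxx.
have Hb : 0 < index v s < size s.
  rewrite idx_lt andbT lt0n; apply/negP => /eqP H.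
  by move: Hv; rewrite -(nth_index r (mem_s v)) H nth_r0 eqxx.
have [c Hc [HG Hcl]] := dfs_at Hb.
have [] := par_uniq (idx_lt v) Hc HG Hcl.
by rewrite nth_index ?mem_s.
Qed.

Lemma Lpe x y : Lparent_edge G s x y = (y != r) && (lpar y == x).
Proof. by rewrite /Lparent_edge Pnil. Qed.

Lemma par_mem v : v != r -> lpar v \in [seq z <- take (index v s) s | G z v].
Proof.
rewrite -Pnil /lpar; case: [seq _ <- _ | _] => // a l _.
by rewrite /= mem_last.
Qed.

Lemma par_G v : v != r -> G (lpar v) v.
Proof. by move/par_mem; rewrite mem_filter => /andP []. Qed.

Lemma par_lt v : v != r -> index (lpar v) s < index v s.
Proof. by move/par_mem; rewrite mem_filter in_take ?mem_s // => /andP []. Qed.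

Lemma par_le v : index (lpar v) s <= index v s.
Proof. case: (eqVneq v r) => [->|/par_lt/ltnW //]; by rewrite par_r. Qed.

Lemma par_nth b : 0 < b < size s -> exists2 c, c < b &
  nth r s c = lpar (nth r s b) /\
  forall k, c < k < b -> forall w, G (nth r s k) w -> w \in take b s.
Proof.
move=> Hb; have [c Hc [HG Hcl]] := dfs_at Hb.
exists c => //; split => //.
by have [] := par_uniq (proj2 (andP Hb)) Hc HG Hcl.
Qed.

Lemma anc_A b : forall a, a < b < size s ->
  anc (nth r s a) (nth r s b) \/
  forall w, G (nth r s a) w -> index w s < b.
Proof.
elim: b {-2}b (leqnn b) => [|n IH] b Hbn a Hab; first by lia.
have Hb : 0 < b < size s by lia.
have [c Hc [Hpar Hcl]] := par_nth Hb.
case: (ltngtP a c) => Hac.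
- have := IH c ltac:(lia) a ltac:(lia).
  case => [[m Hm]|H]; last first.
    by right => w /H; lia.
  by left; exists m.+1; rewrite iterSr -Hpar.
- right => w Hw; rewrite -in_take ?mem_s //; apply: (Hcl a) Hw; lia.
- by left; exists 1; rewrite /= -Hpar Hac.
Qed.

Lemma anc_B u v : G u v -> anc u v \/ anc v u.
Proof.
move=> Huv.
case: (ltngtP (index u s) (index v s)) => H.
- have := @anc_A (index v s) (index u s).
  rewrite !nth_index ?mem_s //; case; rewrite ?idx_lt ?H //; first by left.
  by move/(_ _ Huv); rewrite ltnn.
- have := @anc_A (index u s) (index v s).
  rewrite !nth_index ?mem_s //; case; rewrite ?idx_lt ?H //; first by right.
  by move/(_ u); rewrite HGs Huv ltnn => /(_ isT).
- by left; exists 0; rewrite /= -(nth_index r (mem_s u)) H nth_index ?mem_s.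
Qed.
End Generic.

Lemma dfs_order_eq (V : finType) (G1 G2 : rel V) r s :
  G1 =2 G2 -> dfs_order G1 r s -> dfs_order G2 r s.
Proof.
move=> E [Hv [Hh H]]; split => //; split => // i Hi.
have [j Hj [HG Hc]] := H i Hi; exists j => //; split; first by rewrite -E.
by move=> k Hk w; rewrite -E; apply: Hc.
Qed.

Section Sigma.
Variables (V : finType) (G : rel V) (r : V) (s sigma : seq V).
Hypothesis Hs : dfs_order G r s.
Hypothesis HGs : symmetric G.
Hypothesis Hsig : dfs_order (Ltree G s) r sigma.

Local Notation p := (lpar G s).
Local Notation idx v := (index v sigma).
Local Notation L := (Ltree G s).

Lemma LT u v : L u v = ((v != r) && (p v == u)) || ((u != r) && (p u == v)).
Proof. by rewrite /Ltree !(Lpe Hs). Qed.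

Lemma sidx_pos v : v != r -> 0 < idx v < size sigma.
Proof.
move=> Hv; rewrite (idx_lt Hsig) andbT lt0n; apply/negP => /eqP H.
by move: Hv; rewrite -(nth_index r (mem_s Hsig v)) H (nth_r0 Hsig) eqxx.
Qed.

Lemma L1 v (Hv : v != r) : idx (p v) < idx v.
Proof.
suff: forall n v, idx v < n -> v != r -> idx (p v) < idx v by move=> H; exact: H _ _ (ltnSn _) Hv.
elim => [|n IH] {Hv}v Hn Hv; first by [].
have Hb := sidx_pos Hv.
have [j Hj [HL _]] := dfs_at Hsig Hb.
have Hjs : j < size sigma by case/andP: Hb => _; apply: ltn_trans.
move: HL; rewrite (nth_index r (mem_s Hsig v)) LT.
case/orP => [/andP [_ /eqP ->]|/andP [Hu /eqP Hpu]].
  by rewrite (idx_nth Hsig Hjs).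
have := IH (nth r sigma j); rewrite (idx_nth Hsig Hjs) Hpu => /(_ ltac:(lia) Hu).
lia.
Qed.

Lemma L1le v : idx (p v) <= idx v.
Proof. case: (eqVneq v r) => [->|/L1/ltnW //]; by rewrite (par_r Hs). Qed.

Lemma TC i : 0 < i < size sigma -> forall k, idx (p (nth r sigma i)) < k < i ->
  forall w, L (nth r sigma k) w -> idx w < i.
Proof.
move=> Hb; have [j Hj [HL Hcl]] := dfs_at Hsig Hb.
have Hjs : j < size sigma by case/andP: Hb => _; apply: ltn_trans.
have Hi := idx_nth Hsig (proj2 (andP Hb)).
have E : idx (p (nth r sigma i)) = j.
  move: HL; rewrite LT; case/orP => [/andP [_ /eqP ->]|/andP [Hu /eqP Hpu]].
    by rewrite (idx_nth Hsig Hjs).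
  have := L1 Hu; rewrite Hpu (idx_nth Hsig Hjs) Hi; lia.
rewrite E => k Hk w Hw; rewrite -in_take ?(mem_s Hsig) //; exact: Hcl Hw.
Qed.

Lemma desc i : 0 < i < size sigma -> forall n x w, iter n p x = w ->
  idx (p (nth r sigma i)) < idx w < i -> idx w <= idx x < i.
Proof.
move=> Hb; elim => [|n IH] x w; first by move=> /= -> ; lia.
rewrite iterSr => Hw Hr.
have Hpx := IH (p x) w Hw Hr.
have Hx : x != r.
  apply/negP => /eqP Ex; move: Hpx; rewrite Ex (par_r Hs) (idx_r Hsig); lia.
have Hl : L (nth r sigma (idx (p x))) x.
  by rewrite nth_index ?(mem_s Hsig) // LT Hx eqxx.
have := TC Hb (k := idx (p x)) ltac:(lia) Hl.
have := L1 Hx; lia.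
Qed.

Lemma sigG_cl i : 0 < i < size sigma -> forall k, idx (p (nth r sigma i)) < k < i ->
  forall w, G (nth r sigma k) w -> w \in take i sigma.
Proof.
move=> Hb; set v := nth r sigma i.
move=> k Hk w Hw; rewrite in_take ?(mem_s Hsig) //.
have Hks : k < size sigma by case/andP: Hb => _ H; lia.
case: (anc_B Hs HGs Hw) => [[n Hn]|[n Hn]].
- have := desc Hb Hn; rewrite -/v (idx_nth Hsig Hks) => /(_ Hk); lia.
- suff: idx w <= idx (nth r sigma k) by rewrite (idx_nth Hsig Hks); lia.
  rewrite -Hn; elim: n {Hn} => [|n IH] //=.
  by apply: leq_trans IH; apply: L1le.
Qed.

Lemma HsigG : dfs_order G r sigma.
Proof.
case: Hsig => [Hv [Hh _]]; split => //; split => // i Hb.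
have Hi := idx_nth Hsig (proj2 (andP Hb)).
set v := nth r sigma i.
have Hv' : v != r.
  apply/negP => /eqP E; move: Hi; rewrite -/v E (idx_r Hsig); lia.
exists (idx (p v)); first by have := L1 Hv'; rewrite Hi.
split; first by rewrite nth_index ?(mem_s Hsig) // (par_G Hs).
exact: sigG_cl.
Qed.

Lemma par_eq y : lpar G sigma y = p y.
Proof.
case: (eqVneq y r) => [->|Hy]; first by rewrite (par_r HsigG) (par_r Hs).
have Hb := sidx_pos Hy.
have Hcl := sigG_cl Hb.
rewrite (nth_index r (mem_s Hsig y)) in Hcl.
have HG : G (nth r sigma (idx (p y))) (nth r sigma (idx y)).
  by rewrite !nth_index ?(mem_s Hsig) // (par_G Hs).
have [_ E] := par_uniq HsigG (proj2 (andP Hb)) (L1 Hy) HG Hcl.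
by move: E; rewrite !nth_index ?(mem_s Hsig).
Qed.

Lemma Ltree_eq : Ltree G sigma =2 L.
Proof. by move=> x y; rewrite /Ltree !(Lpe HsigG) !(Lpe Hs) !par_eq. Qed.
End Sigma.

Theorem lemma6 (V : finType) (G T : rel V) (r : V) (sigma : seq V) :
  simple_graph G -> connected_graph G ->
  spanning_tree G T -> is_Ltree_of_DFS G T r ->
  dfs_order T r sigma ->
  dfs_order G r sigma /\ Ltree G sigma =2 T.
Proof.
move=> [_ HGs] _ _ [s Hs HT] Hsig.
have Hsig' : dfs_order (Ltree G s) r sigma.
  by apply: dfs_order_eq Hsig => x y; rewrite HT.
split; first exact: HsigG Hs HGs Hsig'.
by move=> x y; rewrite (Ltree_eq Hs HGs Hsig') HT.
Qed.
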